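(* Let $W$ be a $p$-locally dense, $p$-regular graphon. Then the kernel $W-p$ is positive semidefinite.
   Context: Let $(\Omega,\mu)$ be an atomless standard probability space. A graphon is a symmetric measurable $W:\Omega\times\Omega\to[0,1]$; it is $p$-regular if $\int_\Omega W(x,y)\,dy=p$ for a.e. $x$, and $p$-locally dense if $\iint_{U\times U}W\ge p\,\mu(U)^2$ for every measurable $U\subseteq\Omega$. A kernel (bounded symmetric measurable $K:\Omega\times\Omega\to\mathbb R$) is positive semidefinite if $\iint f(x)K(x,y)f(y)\,dx\,dy\ge0$ for every bounded measurable $f:\Omega\to\mathbb R$. *)

(* Defs.v *)
From HB Require Import structures.
From mathcomp Require Import all_boot all_order all_algebra.
From mathcomp Require Import all_classical all_reals all_analysis.
Set Implicit Arguments. Unset Strict Implicit. Unset Printing Implicit Defensive.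
Import Order.TTheory GRing.Theory Num.Theory.
Local Open Scope classical_set_scope.
Local Open Scope ring_scope.

(* (T, mu) is a standard probability space: the measurable space T is Borel
   isomorphic to a Borel subset of R (standard Borel space). *)
Definition standard_borel (d : measure_display) (T : measurableType d)
  (R : realType) : Prop :=
  exists f : T -> R, injective f /\ measurable_fun setT f /\
    measurable (range f) /\ (forall A : set T, measurable A -> measurable (f @` A)).

Definition atomless (d : measure_display) (T : measurableType d) (R : realType)
  (mu : probability T R) : Prop :=
  forall A : set T, measurable A -> (0 < mu A)%E ->
    exists B : set T, [/\ measurable B, B `<=` A, (0 < mu B)%E & (mu B < mu A)%E].

Definition kernel_fun (d : measure_display) (T : measurableType d) (R : realType)
  (K : T -> T -> R) : Prop :=
  [/\ (forall x y, K x y = K y x),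
      measurable_fun setT (fun z : T * T => K z.1 z.2)
    & exists M : R, forall x y, `|K x y| <= M].

Definition graphon (d : measure_display) (T : measurableType d) (R : realType)
  (W : T -> T -> R) : Prop :=
  [/\ (forall x y, W x y = W y x),
      measurable_fun setT (fun z : T * T => W z.1 z.2)
    & forall x y, 0 <= W x y <= 1].

Definition p_regular (d : measure_display) (T : measurableType d) (R : realType)
  (mu : probability T R) (p : R) (W : T -> T -> R) : Prop :=
  {ae mu, forall x, (\int[mu]_y (W x y)%:E = p%:E)%E}.

Definition p_locally_dense (d : measure_display) (T : measurableType d) (R : realType)
  (mu : probability T R) (p : R) (W : T -> T -> R) : Prop :=
  forall U : set T, measurable U ->
    ((p * fine (mu U) ^+ 2)%:E <=
       \int[(mu \x mu)%E]_(z in U `*` U) (W z.1 z.2)%:E)%E.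

Definition psd_kernel (d : measure_display) (T : measurableType d) (R : realType)
  (mu : probability T R) (K : T -> T -> R) : Prop :=
  kernel_fun K /\
  forall f : T -> R, measurable_fun setT f -> (exists M : R, forall x, `|f x| <= M) ->
    (0 <= \int[(mu \x mu)%E]_z (f z.1 * K z.1 z.2 * f z.2)%:E)%E.

(* Main.v *)
Require Import Defs.
From HB Require Import structures.
From mathcomp Require Import all_boot all_order all_algebra.
From mathcomp Require Import all_classical all_reals all_analysis.
From mathcomp Require Import ring lra zify.
From mathcomp Require Import measurable_realfun.
Set Implicit Arguments. Unset Strict Implicit. Unset Printing Implicit Defensive.
Import Order.TTheory GRing.Theory Num.Theory.
Import numFieldNormedType.Exports.
Local Open Scope classical_set_scope.
Local Open Scope ring_scope.

Module Part1.
Section prob_fine.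
Context d (T : measurableType d) (R : realType) (mu : probability T R).
Local Notation m A := (fine (mu A)).

Lemma muE (A : set T) : measurable A -> mu A = (m A)%:E.
Proof. by move=> mA; rewrite fineK// fin_num_measure. Qed.

Lemma m_ge0 (A : set T) : 0 <= m A.
Proof. by apply: fine_ge0; exact: measure_ge0. Qed.

Lemma m_le1 (A : set T) : measurable A -> m A <= 1.
Proof. by move=> mA; rewrite -lee_fin -muE// probability_le1. Qed.

Lemma m_le (A B : set T) : measurable A -> measurable B -> A `<=` B -> m A <= m B.
Proof. by move=> mA mB AB; rewrite -lee_fin -!muE// le_measure// inE. Qed.

Lemma mU (A B : set T) : measurable A -> measurable B -> A `&` B = set0 ->
  m (A `|` B) = m A + m B.
Proof.
move=> mA mB AB; apply/EFin_inj; rewrite -muE ?EFinD -?muE// ?measureU//; exact: measurableU.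
Qed.

Lemma mT : m setT = 1.
Proof. by rewrite probability_setT. Qed.

Lemma m0 : m set0 = 0.
Proof. by rewrite measure0. Qed.
End prob_fine.

End Part1.
Import Part1.

Module Part2.
Section cover.
Context d (T : measurableType d) (R : realType) (mu : probability T R) (psi : T -> R).
Hypothesis mpsi : measurable_fun setT psi.
Variable bnd : R.
Hypothesis psi_bd : forall x, - bnd < psi x < bnd.
Local Notation m A := (fine (mu A)).

Definition Le t := [set x | psi x <= t].
Definition Lt t := [set x | psi x < t].

Lemma mLe t : measurable (Le t).
Proof.
have := mpsi measurableT (measurable_itv `]-oo, t]); rewrite setTI.
by congr measurable; apply/seteqP; split => x /=; rewrite in_itv.
Qed.

Lemma mLt t : measurable (Lt t).
Proof.
have := mpsi measurableT (measurable_itv `]-oo, t[); rewrite setTI.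
by congr measurable; apply/seteqP; split => x /=; rewrite in_itv.
Qed.

Definition G t := m (Le t).

Lemma G_le s t : s <= t -> G s <= G t.
Proof. by move=> st; apply: m_le; [exact: mLe|exact: mLe|move=> x /= /le_trans; apply]. Qed.

Definition Es s := [set t | G t < s].
Definition cc s := sup (Es s).

Lemma has_sup_Es s : 0 < s <= 1 -> has_sup (Es s).
Proof.
case/andP=> s0 s1; split.
  exists (- bnd); rewrite /Es /= /G (_ : Le (- bnd) = set0) ?m0//.
  apply/seteqP; split => x //=; rewrite /Le /= => h.
  by case/andP: (psi_bd x) => h' _; have := lt_le_trans h' h; rewrite ltxx.
exists bnd => t /=; rewrite /Es /= => Gt; rewrite leNgt; apply/negP => t1.
move: Gt; rewrite /G (_ : Le t = setT) ?mT; last first.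
  apply/seteqP; split => x //= _; case/andP: (psi_bd x) => _ /ltW /le_trans; apply.
  exact: ltW.
by rewrite ltNge s1.
Qed.

Lemma cc_ge s : 0 < s <= 1 -> s <= G (cc s).
Proof.
move=> hs; have hE := has_sup_Es hs.
have Gt t : cc s < t -> s <= G t.
  move=> ct; rewrite leNgt; apply/negP => Gts.
  have := sup_upper_bound hE Gts; rewrite -/(cc s) leNgt ct //.
pose F n := Le (cc s + n.+1%:R^-1).
have cF : (mu \o F) @ \oo --> mu (\bigcap_n F n).
  apply: nonincreasing_cvg_mu.
  - by rewrite (le_lt_trans (probability_le1 _ _)) ?ltry//; exact: mLe.
  - by move=> n; exact: mLe.
  - by apply: bigcap_measurableType => n _; exact: mLe.
  - move=> a b ab; apply/subsetPset => x /= /le_trans; apply.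
    by rewrite lerD2l lef_pV2 ?posrE// ler_nat.
have EF : \bigcap_n F n = Le (cc s).
  apply/seteqP; split => x /=; last first.
    by move=> xc n _; rewrite /F /Le /= (le_trans xc)// lerDl.
  move=> h; rewrite /Le /= leNgt; apply/negP => /ltr_add_invr [k hk].
  by have := h k I; rewrite /F /Le /= leNgt hk.
rewrite EF in cF.
rewrite -lee_fin -muE; last exact: mLe.
rewrite -(cvg_lim _ cF)//; apply: lime_ge; first by apply/cvg_ex; eexists; exact: cF.
near=> n; rewrite /= muE ?lee_fin; last exact: mLe.
by apply: Gt; rewrite ltrDl.
Unshelve. all: by end_near.
Qed.

Lemma cc_lt s : 0 < s <= 1 -> m (Lt (cc s)) <= s.
Proof.
move=> hs; have hE := has_sup_Es hs.
have Gt t : t < cc s -> G t <= s.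
  move=> tc; have e0 : 0 < cc s - t by rewrite subr_gt0.
  have [e Ee] := sup_adherent e0 hE.
  rewrite opprB addrCA subrr addr0 => te; rewrite ltW//.
  exact: le_lt_trans (G_le (ltW te)) Ee.
pose F n := Le (cc s - n.+1%:R^-1).
have cF : (mu \o F) @ \oo --> mu (\bigcup_n F n).
  apply: nondecreasing_cvg_mu.
  - by move=> n; exact: mLe.
  - by apply: bigcup_measurable => n _; exact: mLe.
  - move=> a b ab; apply/subsetPset => x /= /le_trans; apply.
    by rewrite lerD2l lerN2 lef_pV2 ?posrE// ler_nat.
have EF : \bigcup_n F n = Lt (cc s).
  apply/seteqP; split => x /=.
    by move=> [n _]; rewrite /F /Le /Lt /= => /le_lt_trans; apply; rewrite ltrBlDr ltrDl invr_gt0 ltr0n.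
  rewrite /Lt /= => /ltr_add_invr [k hk]; exists k => //; rewrite /F /Le /=.
  by rewrite lerBrDr ltW.
rewrite EF in cF.
rewrite -lee_fin -muE; last exact: mLt.
rewrite -(cvg_lim _ cF)//; apply: lime_le; first by apply/cvg_ex; eexists; exact: cF.
near=> n; rewrite /= muE ?lee_fin; last exact: mLe.
by apply: Gt; rewrite ltrBlDr ltrDl.
Unshelve. all: by end_near.
Qed.


Hypothesis psi0 : forall c, mu (psi @^-1` [set c]) = 0%E.

Lemma mpre1 c : measurable (psi @^-1` [set c]).
Proof. by have := mpsi measurableT (measurable_set1 c); rewrite setTI. Qed.

Lemma small_cover (N : nat) : (0 < N)%N -> exists (n : nat) (C : nat -> set T),
  [/\ forall j, measurable (C j), forall j, m (C j) <= N%:R^-1 &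
      forall x, exists2 j, (j < n)%N & C j x].
Proof.
move=> N0.
pose ck (k : nat) := cc (k%:R / N%:R).
have hs k : (0 < k)%N -> (k <= N)%N -> 0 < (k%:R / N%:R : R) <= 1.
  move=> k0 kN; apply/andP; split; first by rewrite divr_gt0 ?ltr0n.
  by rewrite ler_pdivrMr ?ltr0n// mul1r ler_nat.
have hA k : (0 < k)%N -> (k <= N)%N -> k%:R / N%:R <= G (ck k).
  by move=> k0 kN; apply: cc_ge; exact: hs.
have hB k : (0 < k)%N -> (k <= N)%N -> m (Lt (ck k)) <= k%:R / N%:R.
  by move=> k0 kN; apply: cc_lt; exact: hs.
pose C j := if j == 0%N then Lt (ck 1%N) else if (j < N)%N then Lt (ck j.+1) `\` Le (ck j)
  else if j == N then setT `\` Le (ck N) else psi @^-1` [set ck (j - N.+1)%N].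
exists (N + N.+2)%N, C; split.
- move=> j; rewrite /C; case: ifP => _; first exact: mLt.
  case: ifP => _; first by apply: measurableD; [exact: mLt|exact: mLe].
  case: ifP => _; first by apply: measurableD => //; exact: mLe.
  exact: mpre1.
- move=> j; rewrite /C; case: ifP => j0.
    by rewrite (le_trans (hB 1%N _ _))// ?mul1r.
  case: ifP => jN.
    have j0' : (0 < j)%N by rewrite lt0n j0.
    have [ab|ba] := ltP (ck j) (ck j.+1).
      have E : Lt (ck j.+1) = (Lt (ck j.+1) `\` Le (ck j)) `|` Le (ck j).
        rewrite setUC setDUK// => x; rewrite /Le /Lt /= => /le_lt_trans; apply; exact: ab.
      have h2 := hB j.+1 isT jN; rewrite {1}E mU in h2; last 3 first.
      + by apply: measurableD; [exact: mLt|exact: mLe].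
      + exact: mLe.
      + by rewrite setDKI.
      have := hA j j0' (ltnW jN); rewrite /G => h1.
      have e : (j.+1%:R / N%:R : R) = j%:R/N%:R + N%:R^-1 by rewrite -addn1 natrD mulrDl mul1r.
      rewrite e in h2; lra.
    rewrite (_ : _ `\` _ = set0) ?m0 ?invr_ge0 ?ler0n//.
    apply/seteqP; split => x //=; rewrite /Le /Lt /= => -[h1 /negP]; rewrite -ltNge => h2.
    by have := lt_trans h2 h1; rewrite ltNge ba.
  case: ifP => jN'.
    have : 1 <= G (ck N).
      by have := hA N N0 (leqnn N); rewrite divff// pnatr_eq0 -lt0n.
    have E : setT = (setT `\` Le (ck N)) `|` Le (ck N) by rewrite setUC setDUK.
    have h2 := mT mu; rewrite {1}E mU in h2; last 3 first.
    + by apply: measurableD => //; exact: mLe.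
    + exact: mLe.
    + by rewrite setDKI.
    rewrite /G => h1; have := m_ge0 mu (setT `\` Le (ck N)).
    have : 0 <= (N%:R^-1 : R) by rewrite invr_ge0 ler0n.
    lra.
  by rewrite psi0 invr_ge0 ler0n.
- move=> x; set t := psi x.
  have [[k kN tk]|nk] := pselect (exists2 k, (k <= N)%N & t = ck k).
    exists (N.+1 + k)%N; first by rewrite -addSnnS addnC ltn_add2r ltnS.
    rewrite /C; have -> : (N.+1 + k == 0)%N = false by [].
    have -> : (N.+1 + k < N)%N = false by apply/negbTE; rewrite -leqNgt leqW// leq_addr.
    have -> : (N.+1 + k == N)%N = false by apply/negbTE; rewrite neq_ltn ltnS leq_addr orbT.
    by rewrite /= addKn.
  have [tN|Nt] := ltP (ck N) t.
    exists N; first by lia.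
    rewrite /C ifF; last by apply/negbTE; rewrite -lt0n.
    rewrite ltnn eqxx /= /Le /=; split => //; apply/negP; rewrite -ltNge; exact: tN.
  have tN : t < ck N.
    rewrite lt_neqAle Nt andbT; apply/eqP => h; apply: nk; exists N => //.
  have key j : (0 < j)%N -> (j <= N)%N -> t < ck j ->
      t < ck 1%N \/ exists k, [/\ (0 < k)%N, (k < j)%N, ck k < t & t < ck k.+1].
    elim: j => // j IH _ jN tj.
    have [j0|j0] := posnP j; first by subst j; left.
    have [tj'|jt] := ltP t (ck j).
      case: (IH j0 (ltnW jN) tj') => [|[k [k0 kj h1 h2]]]; first by left.
      by right; exists k; split => //; exact: ltnW.
    right; exists j; split => //; rewrite lt_neqAle jt andbT.
    by apply/eqP => h; apply: nk; exists j => //; exact: ltnW.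
  case: (key N N0 (leqnn N) tN) => [t1|[k [k0 kN h1 h2]]].
    by exists 0%N; [lia | exact: t1].
  exists k; first by rewrite ltn_addr.
  rewrite /C ifF; last by apply/negbTE; rewrite -lt0n.
  rewrite kN; split; first exact: h2.
  by rewrite /Le /=; apply/negP; rewrite -ltNge.
Qed.

End cover.

End Part2.
Import Part2.

Module Part3.
Section cover2.
Context d (T : measurableType d) (R : realType) (mu : probability T R).
Local Notation m A := (fine (mu A)).

Lemma small_cover_T : standard_borel T R -> atomless mu ->
  forall N : nat, (0 < N)%N -> exists (n : nat) (C : nat -> set T),
  [/\ forall j, measurable (C j), forall j, m (C j) <= N%:R^-1 &
      forall x, exists2 j, (j < n)%N & C j x].
Proof.
move=> [phi [iphi [mphi _]]] atl N N0.
pose psi := atan \o phi.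
have mpsi : measurable_fun setT psi.
  apply: measurableT_comp mphi; apply: continuous_measurable_fun.
  exact: continuous_atan.
have bd x : - (pi / 2) < psi x < pi / 2 by rewrite atan_gtNpi2 atan_ltpi2.
apply: (@small_cover _ T R mu psi mpsi (pi / 2) bd _ N N0).
move=> c; set A := psi @^-1` [set c].
have mA : measurable A by exact: mpre1.
apply/eqP; rewrite eq_le measure_ge0 andbT leNgt; apply/negP => A0.
have [B [mB BA B0 BA']] := atl A mA A0.
have [[y By]|nB] := pselect (exists y, B y).
  have AB : A = B.
    apply/seteqP; split => // z Az; suff -> : z = y by [].
    apply: iphi; apply: (can_inj (@atanK R)).
    have h1 : psi y = c := BA _ By.
    have h2 : psi z = c := Az.
    exact: (etrans h2 (esym h1)).
  by move: BA'; rewrite AB ltxx.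
have : B = set0 by apply/seteqP; split => // z Bz; apply: nB; exists z.
by move=> B0'; move: B0; rewrite B0' measure0 ltxx.
Qed.
End cover2.

End Part3.
Import Part3.

Module Part4.
Lemma indicX d (T : measurableType d) (R : realType) (A C : set T) (z : T * T) :
  \1_(A `*` C) z = \1_A z.1 * \1_C z.2 :> R.
Proof.
rewrite !indicE.
have [h1|h1] := boolP (z.1 \in A); have [h2|h2] := boolP (z.2 \in C);
  rewrite ?mulr1 ?mulr0 ?mul0r.
- by rewrite mem_set //; split; apply/set_mem.
- rewrite memNset //; move=> [_ /mem_set]; by rewrite (negbTE h2).
- rewrite memNset //; move=> [/mem_set]; by rewrite (negbTE h1).
- rewrite memNset //; move=> [/mem_set]; by rewrite (negbTE h1).
Qed.

Section form.
Context d (T : measurableType d) (R : realType) (mu : probability T R).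
Local Notation m A := (fine (mu A)).
Local Notation P := (mu \x mu)%E.

Definition bm d0 (U : measurableType d0) (F : U -> R) :=
  measurable_fun setT F /\ exists c, forall z, `|F z| <= c.

Lemma P_setX (A B : set T) : measurable A -> measurable B ->
  P (A `*` B) = (m A * m B)%:E.
Proof. by move=> mA mB; rewrite product_measure1E// EFinM -(muE mu mA) -(muE mu mB). Qed.

Lemma P_setT : P setT = 1%E.
Proof. by rewrite -setXTT P_setX// mT mulr1. Qed.

Lemma intP (F : T * T -> R) : bm F -> P.-integrable setT (EFin \o F).
Proof.
move=> [mF [c hc]]; apply: measurable_bounded_integrable => //.
  apply: (@le_lt_trans _ _ 1%E); last exact: ltry.
  by rewrite le_eqVlt; apply/orP; left; apply/eqP; exact: P_setT.
exists c; split => [|M0 cM0]; first exact: num_real.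
move=> z _ /=; rewrite (le_trans (hc z))//; exact: ltW.
Qed.

Definition RI (F : T * T -> R) := Rintegral P setT F.

Lemma RI_lin (F1 F2 F3 : T * T -> R) (a b : R) : bm F1 -> bm F2 -> bm F3 ->
  RI (fun z => F1 z + a * F2 z + b * F3 z) = RI F1 + a * RI F2 + b * RI F3.
Proof.
move=> h1 h2 h3.
have i1 := intP h1; have i2 := intP h2; have i3 := intP h3.
have mT2 : measurable (setT : set (T * T)) by exact: measurableT.
have iZ (F : T * T -> R) c : P.-integrable setT (EFin \o F) ->
    P.-integrable setT (EFin \o (fun z => c * F z)).
  move=> iF; have := integrableZl mT2 c iF.
  by apply: eq_integrable; first exact: mT2.
have i12 : P.-integrable setT (EFin \o (fun z => F1 z + a * F2 z)).
  have := integrableD mT2 i1 (iZ _ a i2).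
  by apply: eq_integrable; first exact: mT2.
rewrite /RI (RintegralD mT2 i12 (iZ _ b i3)) (RintegralD mT2 i1 (iZ _ a i2)).
by rewrite (RintegralZl a mT2 i2) (RintegralZl b mT2 i3).
Qed.

Lemma bm_lin (F1 F2 : T * T -> R) (a : R) : bm F1 -> bm F2 -> bm (fun z => F1 z + a * F2 z).
Proof.
move=> [m1 [c1 h1]] [m2 [c2 h2]]; split.
  by apply: measurable_funD => //; apply: measurable_funM => //; exact: measurable_cst.
exists (c1 + `|a| * c2) => z; rewrite (le_trans (ler_normD _ _))// lerD// normrM.
by apply: ler_pM => //; exact: (le_trans (normr_ge0 _) (h2 z)).
Qed.

Lemma RI_add (F G : T * T -> R) : bm F -> bm G ->
  RI (fun z => F z + G z) = RI F + RI G.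
Proof.
move=> hF hG; have mT2 : measurable (setT : set (T * T)) by exact: measurableT.
by rewrite /RI (RintegralD mT2 (intP hF) (intP hG)).
Qed.

Lemma RI_scale (F : T * T -> R) a : bm F -> RI (fun z => a * F z) = a * RI F.
Proof.
move=> hF; have mT2 : measurable (setT : set (T * T)) by exact: measurableT.
by rewrite /RI (RintegralZl a mT2 (intP hF)).
Qed.

Lemma RI_ind (S : set (T * T)) c : measurable S ->
  RI (fun z => c * \1_S z) = c * fine (P S).
Proof.
move=> mS; rewrite RI_scale; last first.
  split; first exact: measurable_indic.
  by exists 1 => z; rewrite indicE; case: (_ \in _); rewrite ?normr1 ?normr0.
congr (_ * _); rewrite /RI /Rintegral.
by rewrite integral_indic// setIT.
Qed.

Variable K : T -> T -> R.
Hypothesis mK : measurable_fun setT (fun z : T * T => K z.1 z.2).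
Variable M : R.
Hypothesis KM : forall x y, `|K x y| <= M.

Definition Bf (f g : T -> R) := RI (fun z => f z.1 * K z.1 z.2 * g z.2).

Lemma bm_prod (f g : T -> R) : bm f -> bm g -> bm (fun z => f z.1 * K z.1 z.2 * g z.2).
Proof.
move=> [mf [cf hf]] [mg [cg hg]]; split.
  apply: measurable_funM; last exact: measurableT_comp mg measurable_snd.
  by apply: measurable_funM => //; exact: measurableT_comp mf measurable_fst.
exists (cf * M * cg) => z; rewrite !normrM.
have M0 : 0 <= M by exact: le_trans (normr_ge0 _) (KM z.1 z.2).
apply: ler_pM; [exact: mulr_ge0 | exact: normr_ge0 | | exact: hg].
by apply: ler_pM.
Qed.

Lemma expand (f g : T -> R) a : bm f -> bm g ->
  Bf (fun x => f x + a * g x) (fun x => f x + a * g x) =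
  Bf f f + a * (Bf f g + Bf g f) + a ^+ 2 * Bf g g.
Proof.
move=> hf hg.
have E : (fun z : T * T => (f z.1 + a * g z.1) * K z.1 z.2 * (f z.2 + a * g z.2)) =
  (fun z => f z.1 * K z.1 z.2 * f z.2 +
     a * (f z.1 * K z.1 z.2 * g z.2 + 1 * (g z.1 * K z.1 z.2 * f z.2)) +
     a ^+ 2 * (g z.1 * K z.1 z.2 * g z.2)).
  by apply/funext => z; ring.
rewrite /Bf E RI_lin; [|exact: bm_prod|by apply: bm_lin; exact: bm_prod|exact: bm_prod].
rewrite (_ : RI (fun z => _ + 1 * _) = RI (fun z => f z.1 * K z.1 z.2 * g z.2) +
   RI (fun z => g z.1 * K z.1 z.2 * f z.2)) //.
rewrite -RI_add; [|exact: bm_prod|exact: bm_prod].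
by congr RI; apply/funext => z; rewrite mul1r.
Qed.

Lemma Bf_bound (f g : T -> R) (a b : R) (A C : set T) :
  measurable A -> measurable C -> bm f -> bm g -> 0 <= a -> 0 <= b ->
  (forall x, `|f x| <= a * \1_A x) -> (forall x, `|g x| <= b * \1_C x) ->
  `|Bf f g| <= M * a * b * (m A * m C).
Proof.
move=> mA mC hf hg a0 b0 fA gC.
have M0 : 0 <= M by exact: le_trans (normr_ge0 _) (KM point point).
have mT2 : measurable (setT : set (T * T)) by exact: measurableT.
have hF := bm_prod hf hg.
have mAC : measurable (A `*` C) by exact: measurableX.
have hI : bm (fun z => M * a * b * \1_(A `*` C) z).
  split; first by apply: measurable_funM; [exact: measurable_cst|exact: measurable_indic].
  exists (`|M * a * b|) => z; rewrite normrM; rewrite -[leRHS]mulr1 ler_wpM2l//.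
  by rewrite indicE; case: (_ \in _); rewrite ?normr1 ?normr0.
rewrite /Bf /RI; apply: le_trans (le_normr_Rintegral mT2 (intP hF)) _.
apply: le_trans (le_Rintegral mT2 (integrable_norm (intP hF)) (intP hI) _) _.
  move=> z _ /=; rewrite indicX !normrM.
  have e : M * a * b * (\1_A z.1 * \1_C z.2) = (a * \1_A z.1) * M * (b * \1_C z.2) by ring.
  rewrite e; apply: ler_pM; [exact: mulr_ge0 | exact: normr_ge0 | | exact: gC].
  apply: ler_pM => //; exact: fA.
by have := RI_ind (M * a * b) mAC; rewrite /RI => ->; rewrite P_setX.
Qed.

End form.

End Part4.
Import Part4.

Module Part5.

Lemma ind1 (T : Type) (R : realType) (A : set T) x : A x -> \1_A x = 1 :> R.
Proof. by move=> Ax; rewrite indicE mem_set. Qed.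
Lemma ind0 (T : Type) (R : realType) (A : set T) x : ~ A x -> \1_A x = 0 :> R.
Proof. by move=> Ax; rewrite indicE memNset. Qed.

Section round.
Context d (T : measurableType d) (R : realType) (mu : probability T R).
Local Notation m A := (fine (mu A)).
Variable K : T -> T -> R.
Hypothesis mK : measurable_fun setT (fun z : T * T => K z.1 z.2).
Variable M : R.
Hypothesis KM : forall x y, `|K x y| <= M.
Local Notation B := (Bf mu K).
Local Notation I f := (Bf mu K f f).

Lemma bmT_lin (f g : T -> R) a : bm f -> bm g -> bm (fun x => f x + a * g x).
Proof.
move=> [m1 [c1 h1]] [m2 [c2 h2]]; split.
  by apply: measurable_funD => //; apply: measurable_funM => //; exact: measurable_cst.
exists (c1 + `|a| * c2) => z; rewrite (le_trans (ler_normD _ _))// lerD// normrM.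
by apply: ler_pM => //; exact: (le_trans (normr_ge0 _) (h2 z)).
Qed.

Lemma bmT_mul (f g : T -> R) : bm f -> bm g -> bm (fun x => f x * g x).
Proof.
move=> [m1 [c1 h1]] [m2 [c2 h2]]; split; first exact: measurable_funM.
exists (c1 * c2) => z; rewrite normrM.
apply: ler_pM => //; exact: normr_ge0.
Qed.

Lemma bm_ind (A : set T) : measurable A -> bm (\1_A : T -> R).
Proof.
move=> mA; split; first exact: measurable_indic.
by exists 1 => z; rewrite indicE; case: (_ \in _); rewrite ?normr1 ?normr0.
Qed.

Lemma bm_cst (c : R) : bm (fun _ : T => c).
Proof. by split; [exact: measurable_cst | exists `|c|]. Qed.

Hypothesis Hdiag : forall A : set T, measurable A -> 0 <= I (\1_A).

Variables (del eps : R).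
Hypothesis del0 : 0 <= del.
Variable Qf : nat -> set T.

Definition zo (v : R) := v = 0 \/ v = 1.
Let Kc := M * (2 * del + del ^+ 2 + eps).

Lemma round (n : nat) : forall h : T -> R, bm h -> (forall x, 0 <= h x <= 1) ->
  (forall i, (i < n)%N -> [/\ measurable (Qf i), m (Qf i) <= eps &
     exists a, 0 <= a <= 1 /\ forall x, Qf i x -> zo (h x) \/ a <= h x <= a + del]) ->
  (forall x, zo (h x) \/ exists2 i, (i < n)%N & Qf i x) ->
  exists (Bs S : set T), [/\ measurable Bs, measurable S,
    (forall x, S x -> ~ zo (h x)) & I (\1_Bs) - Kc * m S <= I h].
Proof.
have M0 : 0 <= M by exact: le_trans (normr_ge0 _) (KM point point).
elim: n => [|n IH] h hh h01 hQ hcov.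
  have mh := hh.1.
  pose Bs := h @^-1` [set 1].
  have mBs : measurable Bs by have := mh measurableT _ (measurable_set1 1); rewrite setTI.
  exists Bs, set0; split => //.
  have -> : \1_Bs = h.
    apply/funext => x; have [|[i]] := hcov x; last by [].
    case=> hx; first by rewrite ind0 ?hx// /Bs /= hx => /eqP; rewrite eq_sym oner_eq0.
    by rewrite ind1 ?hx.
  by rewrite m0 mulr0 subr0.
have [mQ eQ [a [a01 ha]]] := hQ n (ltnSn n).
have mh := hh.1.
pose Q' := Qf n `&` [set x | ~ zo (h x)].
have mQ' : measurable Q'.
  apply: measurableI => //.
  have -> : [set x | ~ zo (h x)] = ~` (h @^-1` [set 0] `|` h @^-1` [set 1]).
    by apply/seteqP; split => x /=; rewrite /zo.
  apply: measurableC; apply: measurableU.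
    by have := mh measurableT _ (measurable_set1 0); rewrite setTI.
  by have := mh measurableT _ (measurable_set1 1); rewrite setTI.
pose e : T -> R := \1_Q'.
pose h0 x := h x * (1 + (-1) * e x).
pose ht t x := h0 x + t * e x.
have be : bm e by exact: bm_ind.
have bh0 : bm h0 by apply: bmT_mul => //; apply: bmT_lin => //; exact: bm_cst.
have bht t : bm (ht t) by exact: bmT_lin.
have htin t x : Q' x -> ht t x = t by move=> xQ; rewrite /ht /h0 /e ind1//; ring.
have htout t x : ~ Q' x -> ht t x = h x by move=> xQ; rewrite /ht /h0 /e ind0//; ring.
pose dd x := (h x + (-1) * a) * e x.
have bd : bm dd by apply: bmT_mul => //; apply: bmT_lin => //; exact: bm_cst.
have hE : h = (fun x => ht a x + 1 * dd x).
  by apply/funext => x; rewrite /ht /h0 /dd; ring.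
have E1 : I h = I (ht a) + 1 * (B (ht a) dd + B dd (ht a)) + 1 ^+ 2 * I dd.
  by rewrite {1 2}hE (expand mu mK KM).
have Et t : I (ht t) = I h0 + t * (B h0 e + B e h0) + t ^+ 2 * I e.
  by rewrite /ht (expand mu mK KM).
have mQ'0 : 0 <= m Q' by exact: m_ge0.
have mQ'1 : m Q' <= 1 by exact: m_le1.
have mQ'e : m Q' <= eps.
  by apply: le_trans eQ; apply: m_le => // x [].
have mT1 : m setT = 1 by exact: mT.
have pa x : `|ht a x| <= 1 * \1_setT x.
  rewrite ind1// mul1r; have [xQ|xQ] := pselect (Q' x).
    by rewrite htin// ger0_norm; case/andP: a01.
  by rewrite htout// ger0_norm; case/andP: (h01 x).
have pd x : `|dd x| <= del * \1_Q' x.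
  have [xQ|xQ] := pselect (Q' x); last by rewrite /dd /e !ind0// mulr0 normr0 mulr0.
  rewrite /dd /e !ind1// !mulr1; case: xQ => xQ nz.
  case: (ha x xQ) => // /andP[h1 h2].
  by rewrite ger0_norm; lra.
have pe x : `|e x| <= 1 * \1_Q' x.
  by rewrite /e mul1r indicE; case: (_ \in _); rewrite ?normr1 ?normr0.
have b1 := Bf_bound mu mK KM measurableT mQ' (bht a) bd ler01 del0 pa pd.
have b2 := Bf_bound mu mK KM mQ' measurableT bd (bht a) del0 ler01 pd pa.
have b3 := Bf_bound mu mK KM mQ' mQ' bd bd del0 del0 pd pd.
have b4 := Bf_bound mu mK KM mQ' mQ' be be ler01 ler01 pe pe.
rewrite mT1 in b1 b2.
set g := I e in b4 Et.
set bb := B h0 e + B e h0 in Et.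
have [t [zt tle]] : exists t, zo t /\ I (ht t) <= I (ht a) + `|g|.
  have Ea := Et a; have E0 := Et 0; have E1' := Et 1.
  rewrite expr2 !mul0r !addr0 in E0; rewrite expr1n !mul1r in E1'.
  have gl : - `|g| <= g by exact: lerNnormlW.
  have gu : g <= `|g| by exact: ler_norm.
  case/andP: a01 => a0 a1.
  have [bp|bn] := lerP 0 (bb + g).
    exists 0; split; first by left.
    rewrite E0 Ea.
    have h1 : a * (- g) <= a * bb by rewrite ler_wpM2l//; lra.
    have h2 : (a ^+ 2 - a) * g >= - `|g|.
      have : 0 <= a - a ^+ 2 <= 1 by apply/andP; split; nra.
      nra.
    nra.
  exists 1; split; first by right.
  rewrite E1' Ea.
  have h1 : (1 - a) * bb <= (1 - a) * (- g) by rewrite ler_wpM2l; lra.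
  have h2 : a * (1 - a) * g <= `|g|.
    have : 0 <= a * (1 - a) <= 1 by apply/andP; split; nra.
    nra.
  nra.
have zt' : forall x, Q' x -> zo (ht t x) by move=> x xQ; rewrite htin.
have t01 : 0 <= t <= 1 by case: zt => ->; rewrite ?lexx ?ler01.
have [Bs [S' [mBs mS' S'z hIH]]] : exists (Bs S : set T), [/\ measurable Bs, measurable S,
    (forall x, S x -> ~ zo (ht t x)) & I (\1_Bs) - Kc * m S <= I (ht t)].
  apply: IH; first exact: bht.
  - move=> x; have [xQ|xQ] := pselect (Q' x); first by rewrite htin.
    by rewrite htout.
  - move=> i ilt; have [mi ei [ai [ai01 hai]]] := hQ i (ltnW ilt).
    split => //; exists ai; split => // x xi.
    have [xQ|xQ] := pselect (Q' x); first by left; rewrite htin.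
    by rewrite htout//; exact: hai.
  - move=> x; have [xQ|xQ] := pselect (Q' x); first by left; rewrite htin.
    rewrite htout//; case: (hcov x) => [|[i]]; first by left.
    rewrite ltnS leq_eqVlt => /orP[/eqP ->|ilt] xi; last by right; exists i.
    left; apply: contrapT => nz; apply: xQ; split => //.
exists Bs, (S' `|` Q'); split => //.
- exact: measurableU.
- move=> x [xS|xQ]; last by case: xQ.
  have nQ : ~ Q' x by move=> xQ; apply: (S'z x xS); exact: zt'.
  by have := S'z x xS; rewrite htout.
have dis : S' `&` Q' = set0.
  apply/seteqP; split => // x [xS xQ]; exact: (S'z x xS (zt' x xQ)).
rewrite mU//.
have e1 : I h >= I (ht a) - 2 * (M * del * m Q') - M * del * del * (m Q' * m Q').
  rewrite E1 expr1n !mul1r.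
  move: b1 b2 b3; rewrite !mul1r !mulr1.
  set u1 := B (ht a) dd; set u2 := B dd (ht a); set u3 := I dd.
  move=> b1 b2 b3.
  have := lerNnormlW b1; have := lerNnormlW b2; have := lerNnormlW b3.
  rewrite mulrC in b2. lra.
have e2 : I (ht a) >= I (ht t) - M * (m Q' * m Q').
  by have := lerNnormlW b4; rewrite !mulr1; lra.
have c0 : 0 <= M * (del * del) by rewrite mulr_ge0 // mulr_ge0.
have hq : m Q' * m Q' <= m Q' by nra.
have e3 := ler_wpM2l c0 hq.
have hq2 : m Q' * m Q' <= eps * m Q' by nra.
have e4 := ler_wpM2l M0 hq2.
rewrite /Kc; move: hIH e1 e2 e3 e4.
set i1 := I \1_Bs; set i2 := I (ht t); set i3 := I (ht a); set i4 := I h.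
move=> hIH e1 e2 e3 e4.
rewrite /Kc in hIH.
lra.
Qed.
End round.

End Part5.
Import Part5.

Module Part6.

Section main_pos.
Context d (T : measurableType d) (R : realType) (mu : probability T R).
Local Notation m A := (fine (mu A)).
Variable K : T -> T -> R.
Hypothesis mK : measurable_fun setT (fun z : T * T => K z.1 z.2).
Variable M : R.
Hypothesis KM : forall x y, `|K x y| <= M.
Local Notation I f := (Bf mu K f f).
Hypothesis Hdiag : forall A : set T, measurable A -> 0 <= I (\1_A).
Hypothesis Hcover : forall N : nat, (0 < N)%N -> exists (n : nat) (C : nat -> set T),
  [/\ forall j, measurable (C j), forall j, m (C j) <= N%:R^-1 &
      forall x, exists2 j, (j < n)%N & C j x].

Lemma I_bound (g : T -> R) (N : nat) : bm g -> (forall x, 0 <= g x <= 1) -> (0 < N)%N ->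
  - (M * (2 * N%:R^-1 + N%:R^-1 ^+ 2 + N%:R^-1)) <= I g.
Proof.
move=> bg g01 N0.
have M0 : 0 <= M by exact: le_trans (normr_ge0 _) (KM point point).
have [n [C [mC eC cC]]] := Hcover N0.
set del : R := N%:R^-1.
have del0 : 0 <= del by rewrite invr_ge0 ler0n.
have Npos : 0 < (N%:R : R) by rewrite ltr0n.
pose Lev (k : nat) := [set x | k%:R * del <= g x <= k%:R * del + del].
have mLev k : measurable (Lev k).
  have := bg.1 measurableT _ (measurable_itv `[k%:R * del, k%:R * del + del]).
  by rewrite setTI; congr measurable; apply/seteqP; split => x /=; rewrite in_itv.
pose Qf i := C (i %/ N.+1)%N `&` Lev (i %% N.+1)%N.
have := @round d T R mu K mK M KM del del del0 Qf (n * N.+1)%N g bg g01.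
case.
- move=> i _; split.
  + exact: measurableI.
  + apply: le_trans (eC (i %/ N.+1)%N); apply: m_le => //; first exact: measurableI.
    by move=> x [].
  + exists ((i %% N.+1)%N%:R * del); split.
      apply/andP; split; first by rewrite mulr_ge0 ?ler0n.
      rewrite /del ler_pdivrMr// mul1r ler_nat -ltnS ltn_pmod//.
    by move=> x [_ hx]; right.
- move=> x; right.
  have [j jn Cj] := cC x.
  pose k := Num.truncn (g x * N%:R).
  have gN0 : 0 <= g x * N%:R by rewrite mulr_ge0 ?ler0n//; case/andP: (g01 x).
  have kN : (k <= N)%N.
    rewrite truncn_le_nat; apply: le_lt_trans (_ : N%:R < N.+1%:R); last by rewrite ltr_nat.
    by rewrite -[leRHS]mul1r ler_wpM2r ?ler0n//; case/andP: (g01 x).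
  exists (j * N.+1 + k)%N.
    apply: (leq_trans (_ : _ < j * N.+1 + N.+1)%N); first by rewrite ltn_add2l ltnS.
    by rewrite -mulSnr leq_mul2r jn orbT.
  rewrite /Qf divnMDl// modnMDl divn_small ?addn0 ?modn_small ?ltnS//; split => //.
  have := truncn_itv gN0; rewrite -/k => /andP[h1 h2].
  rewrite /Lev /= /del; apply/andP; split.
    by rewrite ler_pdivrMr// mulrC.
  have h3 : g x <= (k.+1)%:R / N%:R by rewrite ler_pdivlMr// ltW.
  by move: h3; rewrite -natr1 mulrDl mul1r.
move=> Bs [S [mBs mS _ hI]].
have := Hdiag mBs; have := m_ge0 mu S; have := m_le1 mu mS.
have : 0 <= M * (2 * del + del ^+ 2 + del) by rewrite mulr_ge0// !addr_ge0 ?mulr_ge0// ?exprn_ge0.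
move: hI; set c := M * _; set iB := I _; set iG := I g; set s := m S.
move=> hI c0 s1 s0 iB0.
have : c * s <= c by rewrite -[leRHS]mulr1 ler_wpM2l.
lra.
Qed.


Lemma I_nonneg (g : T -> R) : bm g -> (forall x, 0 <= g x <= 1) -> 0 <= I g.
Proof.
move=> bg g01; rewrite leNgt; apply/negP => neg.
have M0 : 0 <= M by exact: le_trans (normr_ge0 _) (KM point point).
set c := - I g.
have c0 : 0 < c by rewrite /c oppr_gt0.
pose N := (Num.truncn (4 * M / c)).+1.
have := I_bound bg g01 (ltn0Sn (Num.truncn (4 * M / c))); rewrite -/N.
set u : R := N%:R^-1.
have Npos : 0 < (N%:R : R) by rewrite ltr0n.
have u0 : 0 < u by rewrite invr_gt0.
have uN : u * N%:R = 1 by rewrite mulVf// gt_eqF.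
have u1 : u <= 1 by rewrite invr_le1// ?ler1n// unitfE gt_eqF.
have h1 : 4 * M < c * N%:R.
  by rewrite -ltr_pdivrMl// mulrC; exact: truncnS_gt.
have h2 : 4 * M * u < c.
  nra.
have h3 : M * u ^+ 2 <= M * u by rewrite ler_wpM2l// expr2 ger_pMl.
rewrite /c in h1 h2 *; lra.
Qed.

End main_pos.

End Part6.
Import Part6.

Module Part7.

Section final.
Context d (T : measurableType d) (R : realType) (mu : probability T R).
Local Notation m A := (fine (mu A)).
Local Notation P := (mu \x mu)%E.
Variables (p : R) (W : T -> T -> R).
Hypothesis gW : graphon W.
Hypothesis Hreg : p_regular mu p W.
Let K := fun x y => W x y - p.

Lemma intT (f : T -> R) : bm f -> mu.-integrable setT (EFin \o f).
Proof.
move=> [mf [c hc]]; apply: measurable_bounded_integrable => //.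
  exact: le_lt_trans (probability_le1 mu measurableT) (ltry 1).
exists c; split => [|M0 cM0]; first exact: num_real.
move=> z _ /=; rewrite (le_trans (hc z))//; exact: ltW.
Qed.

Lemma mWz : measurable_fun setT (fun z : T * T => W z.1 z.2).
Proof. by case: gW. Qed.

Lemma mK : measurable_fun setT (fun z : T * T => K z.1 z.2).
Proof. apply: measurable_funB; first exact: mWz. exact: measurable_cst. Qed.

Lemma KM x y : `|K x y| <= 1 + `|p|.
Proof.
case: gW => _ _ h; rewrite (le_trans (ler_normB _ _))// lerD2r.
by have /andP[h1 h2] := h x y; rewrite ger0_norm.
Qed.

Lemma bmWx x : bm (W x).
Proof.
split; first exact: (measurable_fun_pair2 x mWz).
exists 1 => y; case: gW => _ _ h; have /andP[h1 h2] := h x y.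
by rewrite ger0_norm.
Qed.

Lemma bmWy y : bm (W ^~ y).
Proof.
split; first exact: (measurable_fun_pair1 y mWz).
exists 1 => x; case: gW => _ _ h; have /andP[h1 h2] := h x y.
by rewrite ger0_norm.
Qed.

Lemma RintK x a : (\int[mu]_y (W x y)%:E = p%:E)%E ->
  Rintegral mu setT (fun y => a * K x y) = 0.
Proof.
move=> hx.
have i1 := intT (bmWx x).
have i2 : mu.-integrable setT (EFin \o (fun _ : T => p)) by apply: intT; exact: bm_cst.
have iK : mu.-integrable setT (EFin \o (K x)).
  apply: intT; have -> : K x = (fun y => W x y + (-1) * (fun _ => p) y).
    by apply/funext => y; rewrite /K /=; ring.
  by apply: bmT_lin; [exact: bmWx | exact: bm_cst].
rewrite (RintegralZl a measurableT iK).
rewrite (_ : K x = fun y => W x y - p) // (RintegralB measurableT i1 i2).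
rewrite Rintegral_cst// mT /Rintegral hx /=; by rewrite mulr1 subrr mulr0.
Qed.

Lemma KM' : forall x y, `|K x y| <= 1 + `|p|.
Proof. exact: KM. Qed.

Lemma bmK x : bm (K x).
Proof.
have -> : K x = (fun y => W x y + (-1) * (fun _ => p) y).
  by apply/funext => y; rewrite /K /=; ring.
by apply: bmT_lin; [exact: bmWx | exact: bm_cst].
Qed.

Lemma inner_r (g : T -> R) c x : bm g -> (\int[mu]_y (W x y)%:E = p%:E)%E ->
  (\int[mu]_y (g x * K x y * c)%:E = 0)%E.
Proof.
move=> bg hx.
have bF : bm (fun y => g x * c * K x y) by apply: bmT_mul; [exact: bm_cst | exact: bmK].
have iF := intT bF.
rewrite (_ : (fun y => (g x * K x y * c)%:E) = (fun y => (g x * c * K x y)%:E)); last first.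
  by apply/funext => y; congr EFin; ring.
rewrite -[LHS]fineK; last exact: (integrable_fin_num measurableT iF).
by have := RintK (g x * c) hx; rewrite /Rintegral => ->.
Qed.

Lemma reg_r (g : T -> R) c : bm g -> Bf mu K g (fun _ => c) = 0.
Proof.
move=> bg.
have bF := bm_prod mK KM' bg (bm_cst T c).
rewrite /Bf /RI /Rintegral -(integral12_prod_meas1 (intP mu bF)).
rewrite (@ae_eq_integral _ _ _ mu setT (cst 0%E)) //; last 2 first.
- exact: measurable_fubini_F (intP mu bF).
- apply: filterS Hreg => x hx _; rewrite /fubini_F /=.
  exact: inner_r.
by rewrite integral0.
Qed.

Lemma reg_l (g : T -> R) c : bm g -> Bf mu K (fun _ => c) g = 0.
Proof.
move=> bg.
have bF := bm_prod mK KM' (bm_cst T c) bg.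
rewrite /Bf /RI /Rintegral -(integral21_prod_meas1 (intP mu bF)).
rewrite (@ae_eq_integral _ _ _ mu setT (cst 0%E)) //; last 2 first.
- exact: measurable_fubini_G (intP mu bF).
- apply: filterS Hreg => y hy _; rewrite /fubini_G /=.
  rewrite (_ : (fun x => (c * K x y * g y)%:E) = (fun x => (g y * K y x * c)%:E)).
    exact: inner_r.
  apply/funext => x; congr EFin; rewrite /K; case: gW => sW _ _; rewrite sW; ring.
by rewrite integral0.
Qed.

Lemma bmP_mul (F G : T * T -> R) : bm F -> bm G -> bm (fun z => F z * G z).
Proof.
move=> [m1 [c1 h1]] [m2 [c2 h2]]; split; first exact: measurable_funM.
exists (c1 * c2) => z; rewrite normrM.
apply: ler_pM => //; exact: normr_ge0.
Qed.

Lemma bmP_ind (S : set (T * T)) : measurable S -> bm (\1_S : T * T -> R).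
Proof.
move=> mS; split; first exact: measurable_indic.
by exists 1 => z; rewrite indicE; case: (_ \in _); rewrite ?normr1 ?normr0.
Qed.

Lemma bmWz : bm (fun z : T * T => W z.1 z.2).
Proof.
split; first exact: mWz.
exists 1 => z; case: gW => _ _ h; have /andP[h1 h2] := h z.1 z.2.
by rewrite ger0_norm.
Qed.

Hypothesis Hld : p_locally_dense mu p W.

Lemma Hdiag (A : set T) : measurable A -> 0 <= Bf mu K (\1_A) (\1_A).
Proof.
move=> mA; have mS : measurable (A `*` A) by exact: measurableX.
have bSW : bm (fun z => \1_(A `*` A) z * W z.1 z.2) by apply: bmP_mul; [exact: bmP_ind|exact: bmWz].
have ld := Hld mA; rewrite integral_mkcond in ld.
have e : (fun z => (W z.1 z.2)%:E) \_ (A `*` A) = (fun z => (\1_(A `*` A) z * W z.1 z.2)%:E).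
  apply/funext => z; rewrite patchE indicE; case: ifPn => _; by rewrite ?mul1r ?mul0r.
rewrite e -[X in (_ <= X)%E]fineK in ld; last exact: (integrable_fin_num measurableT (intP mu bSW)).
rewrite lee_fin -/(Rintegral _ _ _) -/(RI mu _) in ld.
have -> : Bf mu K (\1_A) (\1_A) = RI mu (fun z => \1_(A `*` A) z * W z.1 z.2 + (- p) * \1_(A `*` A) z).
  rewrite /Bf; congr RI; apply/funext => z; rewrite indicX /K; ring.
rewrite RI_add //; last exact: (bmP_mul (bm_cst _ (- p)) (bmP_ind mS)).
rewrite RI_ind // P_setX //.
rewrite /= mulNr subr_ge0; rewrite expr2 in ld; exact: ld.
Qed.

Hypothesis sb : standard_borel T R.
Hypothesis atl : atomless mu.

Theorem final_psd : psd_kernel mu (fun x y => W x y - p).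
Proof.
split.
  split.
  - by move=> x y; case: gW => sW _ _; rewrite sW.
  - exact: mK.
  - by exists (1 + `|p|); exact: KM.
move=> f mf [c hc].
set c' := `|c| + 1.
have c'0 : 0 < c' by rewrite /c' ltr_pwDr// normr_ge0.
have fc x : - c' <= f x <= c'.
  have := hc x; rewrite -ler_norml => h; apply: le_trans h _.
  by rewrite /c' ler_wpDr// ler_norm.
have bf : bm f by split => //; exists c.
pose g x := 2^-1 + (2 * c')^-1 * f x.
have bg : bm g by apply: bmT_lin => //; exact: bm_cst.
have g01 x : 0 <= g x <= 1.
  set u := (2 * c')^-1.
  have u0 : 0 < u by rewrite invr_gt0 mulr_gt0.
  have uc : u * c' = 2^-1.
    by rewrite /u; field; rewrite ?gt_eqF// ?pnatr_eq0//; apply/andP; split; rewrite ?gt_eqF//.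
  have /andP[h1 h2] := fc x.
  have h3 : u * f x <= u * c' by rewrite ler_wpM2l// ltW.
  have h4 : u * (- c') <= u * f x by rewrite ler_wpM2l// ltW.
  rewrite /g -/u; rewrite uc mulrN uc in h3 h4 *; apply/andP; split; lra.
have fE : f = (fun x => (fun _ => - c') x + (2 * c') * g x).
  apply/funext => x; rewrite /g; field.
  by rewrite (gt_eqF c'0) ?pnatr_eq0 ?andbT.
have bfK := bm_prod mK KM' bf bf.
rewrite -[X in (0 <= X)%E]fineK; last exact: (integrable_fin_num measurableT (intP mu bfK)).
rewrite lee_fin.
change (0 <= Bf mu K f f).
have Hcover := small_cover_T sb atl.
have := I_nonneg mK KM' Hdiag Hcover bg g01.
rewrite fE (expand mu mK KM' (f := fun _ => - c') (g := g) (2 * c') (bm_cst _ _) bg).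
rewrite (reg_r (- c') (bm_cst _ (- c'))) (reg_r (- c') bg) (reg_l (- c') bg).
move=> h; rewrite !addr0 add0r mulr0 add0r; apply: mulr_ge0 => //.
exact: sqr_ge0.
Qed.

End final.

End Part7.
Import Part7.

Unset Implicit Arguments.

Theorem corollary2p15 (d : measure_display) (T : measurableType d) (R : realType)
  (mu : probability T R) (p : R) (W : T -> T -> R) :
  standard_borel T R -> atomless mu ->
  graphon W -> p_locally_dense mu p W -> p_regular mu p W ->
  psd_kernel mu (fun x y => W x y - p).
Proof.
move=> sb atl gW Hld Hreg.
exact: (@final_psd d T R mu p W gW Hreg Hld sb atl).
Qed.
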